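(* Let $R$ be a DT ring and $a\in R$ with $a^2\in\Delta(R)$. Then $a\in\Delta(R)$. In particular, every nilpotent element of $R$ lies in $\Delta(R)$.
   Context: All rings are associative with identity; $U(R)$ is the group of units. $\Delta(R)=\{x\in R: x+u\in U(R)\text{ for all }u\in U(R)\}$. $\mathrm{Tr}(R)=\{x\in R: x^3=x\}$. A ring $R$ is a DT ring if every $r\in R$ can be written $r=e+d$ with $e\in\mathrm{Tr}(R)$ and $d\in\Delta(R)$. *)

(* Defs.v *)
From HB Require Import structures.
From mathcomp Require Import all_boot all_order all_algebra.
Set Implicit Arguments. Unset Strict Implicit. Unset Printing Implicit Defensive.
Import GRing.Theory.
Local Open Scope ring_scope.

Definition in_Delta (R : unitRingType) (x : R) : Prop :=
  forall u : R, u \is a GRing.unit -> (x + u) \is a GRing.unit.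

Definition tripotent (R : unitRingType) (x : R) : Prop := x ^+ 3 = x.

Definition DT_ring (R : unitRingType) : Prop :=
  forall r : R, exists e d : R, tripotent e /\ in_Delta d /\ r = e + d.

(* Main.v *)
Require Import Defs.
From mathcomp Require Import all_boot all_order all_algebra.
Local Open Scope ring_scope.
Import GRing.Theory.

Section Aux.
Variable R : unitRingType.

Lemma D0 : in_Delta (0 : R).
Proof. by move=> u hu; rewrite add0r. Qed.

Lemma DD (x y : R) : in_Delta x -> in_Delta y -> in_Delta (x + y).
Proof. by move=> hx hy u hu; rewrite -addrA; apply: hx; apply: hy. Qed.

Lemma DN (x : R) : in_Delta x -> in_Delta (- x).
Proof.
move=> hx u hu; have h := hx (- u); rewrite unitrN in h.
by rewrite -[_ + u]opprK opprD opprK unitrN; apply: h.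
Qed.

Lemma DB (x y : R) : in_Delta x -> in_Delta y -> in_Delta (x - y).
Proof. by move=> hx hy; apply: DD => //; apply: DN. Qed.

Lemma DMu (x v : R) : in_Delta x -> v \is a GRing.unit -> in_Delta (x * v).
Proof.
move=> hx hv u hu.
have -> : x * v + u = (x + u / v) * v by rewrite mulrDl divrK.
by rewrite unitrMr // hx // unitrMr ?unitrV.
Qed.

Lemma DuM (x v : R) : in_Delta x -> v \is a GRing.unit -> in_Delta (v * x).
Proof.
move=> hx hv u hu.
have -> : v * x + u = v * (x + v^-1 * u) by rewrite mulrDr mulVKr.
by rewrite unitrMl // hx // unitrMl ?unitrV.
Qed.

Lemma DM (x y : R) : in_Delta x -> in_Delta y -> in_Delta (x * y).
Proof.
move=> hx hy.
have -> : x * y = x * (y - 1) + x by rewrite mulrBr mulr1 subrK.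
apply: DD => //; apply: DMu => //.
by apply: hy; rewrite unitrN unitr1.
Qed.

Lemma Dunit1 (x : R) : in_Delta x -> (1 - x) \is a GRing.unit.
Proof. by move=> hx; rewrite addrC; exact: (DN _ hx _ (unitr1 R)). Qed.

Lemma key (hR : DT_ring R) (a : R) : in_Delta (a ^+ 2) -> in_Delta a.
Proof.
move=> ha.
have u1 : (1 + a) \is a GRing.unit.
  have h := Dunit1 _ ha.
  have : (1 + a) * (1 - a) = 1 - a ^+ 2.
    by rewrite mulrDl mul1r mulrBr mulr1 expr2 addrA subrK.
  move=> E; rewrite -E in h.
  rewrite unitrM_comm in h; first by case/andP: h.
  rewrite /GRing.comm E mulrDr mulr1 mulrBl mul1r -expr2.
  by rewrite addrA subrK.
have [e [d0 [_ [hd0 E0]]]] := hR (1 + a).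
have ue : e \is a GRing.unit.
  have -> : e = (1 + a) + (- d0) by rewrite E0 addrK.
  by rewrite addrC; exact: (DN _ hd0 _ u1).
have aE : a = e + d0 - 1 by rewrite -E0 addrC addKr.
have aL : forall x, in_Delta x -> in_Delta (a * x).
  move=> x hx; rewrite aE mulrBl mul1r mulrDl.
  by apply: DB => //; apply: DD; [apply: DuM | apply: DM].
have aR : forall x, in_Delta x -> in_Delta (x * a).
  move=> x hx; rewrite aE mulrBr mulr1 mulrDr.
  by apply: DB => //; apply: DD; [apply: DMu | apply: DM].
have [t [d [ht [hd E]]]] := hR a.
have t2 : in_Delta (t ^+ 2).
  have -> : t ^+ 2 = a ^+ 2 - a * d - d * a + d * d.
    have tE : t = a - d by rewrite E addrK.
    by rewrite tE expr2 mulrBl !mulrBr -expr2 opprD opprK addrA.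
  exact: (DD _ _ (DB _ _ (DB _ _ ha (aL d hd)) (aR d hd)) (DM _ _ hd hd)).
have t0 : t = 0.
  have u := Dunit1 _ t2.
  have : t * (1 - t ^+ 2) = 0.
    by rewrite mulrBr mulr1 -exprS ht subrr.
  move=> Z; by rewrite -[t](mulrK u) Z mul0r.
by rewrite E t0 add0r.
Qed.

End Aux.

Theorem lemma2p4 (R : unitRingType) (hR : DT_ring R) :
  (forall a : R, in_Delta (a ^+ 2) -> in_Delta a) /\
  (forall a : R, (exists n : nat, a ^+ n = 0) -> in_Delta a).
Proof.
split; first exact: key.
move=> a [n hn].
have P : forall k (b : R), in_Delta (b ^+ (2 ^ k)) -> in_Delta b.
  elim=> [|k IH] b hb; first by rewrite expn0 expr1 in hb.
  apply: key => //; apply: IH; by rewrite -exprM -expnS.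
apply: (P n).
have le : (n <= 2 ^ n)%N by apply: ltnW; apply: ltn_expl.
by rewrite -(subnK le) exprD hn mulr0; apply: D0.
Qed.
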